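(* Let $\mathcal{K}=\langle\mathcal{T},\mathcal{A}\rangle$ be a Fuzzy Argumentative Knowledge Base (FAKB) and let $q(\vec x)$ be a fuzzy conjunctive query or a union of fuzzy conjunctive queries over $\mathcal{K}$. Then $$\mathit{fcert}(q(\vec x),\mathcal{K})=\mathit{fans}(\mathsf{ref}(q(\vec x),\mathcal{T}),\mathcal{A}).$$
   Context: Vocabulary: sets $\mathsf{N_C},\mathsf{N_R},\mathsf{N_I}$ of concept names, role names, individuals; argument identifiers $\mathsf{N_A}$; textual arguments $\mathsf{N_T}$; argument-feature roles $\mathsf{N_F}$; built-in concepts $\mathtt{Arg},\mathtt{TArg}$ and built-in roles $\mathtt{att},\mathtt{sup},\mathtt{textOf}$. Augmented sets: $\mathsf{N_I^+}=\mathsf{N_I}\cup\mathsf{N_A}\cup\mathsf{N_T}$, $\mathsf{N_C^+}=\mathsf{N_C}\cup\{\mathtt{Arg},\mathtt{TArg}\}$, $\mathsf{N_R^+}=\mathsf{N_R}\cup\mathsf{N_F}\cup\{\mathtt{att},\mathtt{sup},\mathtt{textOf}\}$. An FABox is a finite set of fuzzy assertions $\langle\mathtt{A}(a),v\rangle$, $\langle\mathtt{r}(a,b),v\rangle$ ($\mathtt{A}\in\mathsf{N_C^+}$, $\mathtt{r}\in\mathsf{N_R^+}$) where $v\in[0,1]$ if $\mathtt{A}=\mathtt{Arg}$ or $\mathtt{r}\in\{\mathtt{att},\mathtt{sup}\}$ and $v=1$ otherwise; it is consistent iff each argument has at most one degree, any two $\mathtt{att}/\mathtt{sup}$ assertions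 on the same pair coincide (same role, same degree) and both endpoints occur in $\mathtt{Arg}$ assertions, and $\mathtt{textOf}$ is a bijection between argument identifiers and textual arguments with $\langle\mathtt{textOf}(a_i,TA_i),1\rangle\in\mathcal{A}$ iff $\mathtt{Arg}(a_i)$ and $\langle\mathtt{TArg}(TA_i),1\rangle$ are in $\mathcal{A}$. A DL-Lite$_\mathcal{R}$ TBox is a finite set of inclusions $B\sqsubseteq C$ and $Q\sqsubseteq S$ with $B::=A\mid\exists Q$, $Q::=r\mid r^-$, $C::=B\mid\neg B$, $S::=Q\mid\neg Q$. An FAKB is a pair $\mathcal{K}=\langle\mathcal{T},\mathcal{A}\rangle$ where $\mathcal{A}$ is a consistent FABox and $\mathcal{T}$ is a DL-Lite$_\mathcal{R}$ TBox over $\mathsf{N_C^+},\mathsf{N_R^+}$ in which $\mathtt{Arg},\mathtt{TArg},\mathtt{att},\mathtt{sup},\mathtt{textOf}$ do not occur on the right-hand side of inclusions. A fuzzy interpretation $\mathcal{I}=(\Delta^\mathcal{I},\cdot^\mathcal{I})$ maps individuals to distinct elements of $\Delta^\mathcal{I}$ (unique names), each concept name to a function $\Delta^\mathcal{I}\to[0,1]$ and each role name to a function $\Delta^\mathcal{I}\times\Delta^\mathcal{I}\to[0,1]$, extended by $(\exists Q(a))^\mathcal{I}=\sup_{b}(Q(a,b))^\mathcal{I}$, $(\neg A(a))^\mathcal{I}=1-(A(a))^\mathcal{I}$, $(Q^-(a,b))^\mathcal{I}=(Q(b,a))^\mathcal{I}$, $(\neg Q(a,b))^\mathcal{I}=1-(Q(a,b))^\mathcal{I}$.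 $\mathcal{I}$ is a model of $\mathcal{K}$ if it satisfies every inclusion $G\sqsubseteq H$ (i.e. $(H(a))^\mathcal{I}\ge(G(a))^\mathcal{I}$ for all elements/pairs) and every assertion $\langle f,v\rangle\in\mathcal{A}$ (i.e. $f^\mathcal{I}\ge v$). A fuzzy conjunctive query (FCQ) is $q(\vec x)=\exists\vec y.\varphi(\vec x,\vec y)$ with $\varphi$ a conjunction of atoms $\mathtt{A}(t)$, $\mathtt{r}(t,t')$, $\mathtt{A}\in\mathsf{N_C^+}$, $\mathtt{r}\in\mathsf{N_R^+}$, terms variables or individuals of $\mathsf{N_I^+}$; a UFCQ is a disjunction of FCQs. Degrees of queries use Zadeh semantics: $\wedge$ is $\min$, $\vee$ is $\max$, $\neg$ is $1-\cdot$, existential quantification is $\sup$. Fuzzy certain answers: $\mathit{fcert}(q(\vec x),\mathcal{K})=\{\langle\vec t,\alpha\rangle\mid \alpha=\inf_{\mathcal{I}\models\mathcal{K}}(q(\vec t))^\mathcal{I},\ \alpha>0\}$. For an FABox $\mathcal{A}$, $\mathcal{I}_\mathcal{A}$ is the interpretation whose domain is the individuals of $\mathcal{A}$ and which assigns to each atom the degree it has in $\mathcal{A}$ (and $0$ if absent); $\mathit{ans}(q(\vec x),\mathcal{A})=\{\vec t\mid (q(\vec t))^{\mathcal{I}_\mathcal{A}}>0\}$ and $\mathit{fans}(q(\vec x),\mathcal{A})=\{\langle\vec t,\alpha\rangle\mid\vec t\in\mathit{ans}(q(\vec x),\mathcal{A}),\ \alpha=(q(\vec t))^{\mathcal{I}_\mathcal{A}}\}$.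 $\mathsf{ref}$ denotes the standard DL-Lite query-rewriting (perfect reformulation) algorithm: given a (U)CQ $q(\vec x)$ and a DL-Lite$_\mathcal{R}$ TBox $\mathcal{T}$, it returns a UCQ $\mathsf{ref}(q(\vec x),\mathcal{T})$ such that, for every crisp ABox $\mathcal{A}$ with $\langle\mathcal{T},\mathcal{A}\rangle$ consistent, the certain answers of $q$ over $\langle\mathcal{T},\mathcal{A}\rangle$ equal $\mathit{ans}(\mathsf{ref}(q(\vec x),\mathcal{T}),\mathcal{A})$. *)

(* Defs.v *)
From HB Require Import structures.
From mathcomp Require Import all_boot all_order all_algebra.
From mathcomp Require Import boolp classical_sets reals.
From Stdlib Require List.
Unset Strict Implicit. Unset Printing Implicit Defensive.
Import Order.TTheory GRing.Theory Num.Theory.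
Local Open Scope ring_scope.
Local Open Scope classical_set_scope.

(* Vocabulary.  N_C, N_R, N_F, N_I, N_A, N_T are countably infinite    *)
(* (indexed by nat); built-ins are separate constructors.              *)
Inductive cname : Type :=
| CN of nat | Arg | TArg.

Inductive rname : Type :=  (* N_R^+ = N_R ∪ N_F ∪ {att, sup, textOf} *)
| RN of nat | RF of nat | att | supp | textOf.

Inductive indiv : Type :=  (* N_I^+ = N_I ∪ N_A ∪ N_T *)
| II of nat | IA of nat | IT of nat.

Inductive fassert (R : realType) : Type :=
| CA of cname & indiv & R
| RA of rname & indiv & indiv & R.

Arguments CA {R}.
Arguments RA {R}.

Definition fabox (R : realType) := seq (fassert R).

Definition is_attsup (r : rname) : Prop := r = att \/ r = supp.

Definition assert_deg_ok {R : realType} (f : fassert R) : Prop :=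
  match f with
  | CA A _ v => if A is Arg then (0 <= v <= 1)%R : Prop else v = 1
  | RA r _ _ v =>
      match r with
      | att | supp => (0 <= v <= 1)%R : Prop
      | _ => v = 1
      end
  end.

Definition has_Arg {R : realType} (Ab : fabox R) (a : indiv) : Prop :=
  exists v, List.In (CA Arg a v) Ab.

Definition has_TArg {R : realType} (Ab : fabox R) (t : indiv) : Prop :=
  List.In (CA TArg t 1) Ab.

Definition fabox_consistent {R : realType} (Ab : fabox R) : Prop :=
  (forall a v v', List.In (CA Arg a v) Ab -> List.In (CA Arg a v') Ab -> v = v') /\
  (forall r r' a b v v', is_attsup r -> is_attsup r' ->
      List.In (RA r a b v) Ab -> List.In (RA r' a b v') Ab -> r = r' /\ v = v') /\
  (forall r a b v, is_attsup r -> List.In (RA r a b v) Ab ->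
      has_Arg Ab a /\ has_Arg Ab b) /\
  (forall a t v, List.In (RA textOf a t v) Ab ->
      v = 1 /\ has_Arg Ab a /\ has_TArg Ab t) /\
  (forall a, has_Arg Ab a ->
      exists t, List.In (RA textOf a t 1) Ab /\
        forall t', List.In (RA textOf a t' 1) Ab -> t' = t) /\
  (forall t, has_TArg Ab t ->
      exists a, List.In (RA textOf a t 1) Ab /\
        forall a', List.In (RA textOf a' t 1) Ab -> a' = a).

Inductive role : Type := RP of rname | RI of rname.
Inductive basic : Type := BA of cname | BE of role.

Inductive incl : Type :=
| CIpos of basic & basic
| CIneg of basic & basic
| RIpos of role & role
| RIneg of role & role.

Definition tbox := seq incl.

Definition builtin_role (r : rname) : Prop :=
  r = att \/ r = supp \/ r = textOf.
Definition role_builtin (Q : role) : Prop :=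
  match Q with RP r | RI r => builtin_role r end.
Definition basic_builtin (B : basic) : Prop :=
  match B with
  | BA A => A = Arg \/ A = TArg
  | BE Q => role_builtin Q
  end.

Definition incl_ok (I : incl) : Prop :=
  match I with
  | CIpos _ B | CIneg _ B => ~ basic_builtin B
  | RIpos _ Q | RIneg _ Q => ~ role_builtin Q
  end.

Definition is_FAKB {R : realType} (T : tbox) (Ab : fabox R) : Prop :=
  (forall I, List.In I T -> incl_ok I) /\
  (forall f, List.In f Ab -> assert_deg_ok f) /\
  fabox_consistent Ab.

Record finterp (R : realType) : Type := FInterp {
  dom : Type;
  iind : indiv -> dom;
  iconc : cname -> dom -> R;
  irole : rname -> dom -> dom -> R }.
Arguments dom {R} f : rename.
Arguments iind {R} f _ : rename.
Arguments iconc {R} f _ _ : rename.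
Arguments irole {R} f _ _ _ : rename.

Definition finterp_wf {R : realType} (I : finterp R) : Prop :=
  injective (iind I) /\
  (forall A d, 0 <= iconc I A d <= 1) /\
  (forall r d e, 0 <= irole I r d e <= 1).

Definition role_val {R : realType} (I : finterp R) (Q : role) (d e : dom I) : R :=
  match Q with RP r => irole I r d e | RI r => irole I r e d end.

Definition basic_val {R : realType} (I : finterp R) (B : basic) (d : dom I) : R :=
  match B with
  | BA A => iconc I A d
  | BE Q => sup [set role_val I Q d e | e in [set: dom I]]
  end.

Definition sat_incl {R : realType} (I : finterp R) (ax : incl) : Prop :=
  match ax with
  | CIpos B1 B2 => forall d, basic_val I B1 d <= basic_val I B2 d
  | CIneg B1 B2 => forall d, basic_val I B1 d <= 1 - basic_val I B2 d
  | RIpos Q1 Q2 => forall d e, role_val I Q1 d e <= role_val I Q2 d e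
  | RIneg Q1 Q2 => forall d e, role_val I Q1 d e <= 1 - role_val I Q2 d e
  end.

Definition sat_assert {R : realType} (I : finterp R) (f : fassert R) : Prop :=
  match f with
  | CA A a v => v <= iconc I A (iind I a)
  | RA r a b v => v <= irole I r (iind I a) (iind I b)
  end.

Definition is_model {R : realType} (T : tbox) (Ab : fabox R) (I : finterp R) : Prop :=
  finterp_wf I /\
  (forall ax, List.In ax T -> sat_incl I ax) /\
  (forall f, List.In f Ab -> sat_assert I f).

Definition satisfiable {R : realType} (T : tbox) (Ab : fabox R) : Prop :=
  exists I : finterp R, is_model T Ab I.

Inductive term : Type := TV of nat | TC of indiv.
Inductive atom : Type :=
| QA of cname & term
| QR of rname & term & term.

(* q(h) = ∃(other vars). body ; h = answer terms *)
Record cq : Type := CQ { head : seq term; body : seq atom }.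
Definition ucq := seq cq.

Definition occ_atom (x : nat) (g : atom) : Prop :=
  match g with
  | QA _ t => t = TV x
  | QR _ t1 t2 => t1 = TV x \/ t2 = TV x
  end.

Definition var_of (x : nat) (q : cq) : Prop :=
  List.In (TV x) (head q) \/ exists g, List.In g (body q) /\ occ_atom x g.

Definition cq_safe (q : cq) : Prop :=
  forall x, List.In (TV x) (head q) -> exists g, List.In g (body q) /\ occ_atom x g.

Definition ucq_safe (Q : ucq) : Prop := forall q, List.In q Q -> cq_safe q.

Definition term_val {R : realType} (I : finterp R) (s : nat -> dom I) (t : term) : dom I :=
  match t with TV x => s x | TC a => iind I a end.

Definition atom_val {R : realType} (I : finterp R) (s : nat -> dom I) (g : atom) : R :=
  match g with
  | QA A t => iconc I A (term_val I s t)
  | QR r t1 t2 => irole I r (term_val I s t1) (term_val I s t2)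
  end.

Definition conj_val {R : realType} (vals : seq R) : R :=
  foldr Num.min 1 vals.

Definition cq_deg {R : realType} (I : finterp R) (q : cq) (tup : seq indiv) : R :=
  sup ([set 0] `|` [set conj_val (map (atom_val I s) (body q)) |
        s in [set s : nat -> dom I |
               List.Forall2 (fun t a => term_val I s t = iind I a) (head q) tup]]).

Definition ucq_deg {R : realType} (I : finterp R) (Q : ucq) (tup : seq indiv) : R :=
  sup ([set 0] `|` [set cq_deg I q tup | q in [set q | List.In q Q]]).

Definition fcert {R : realType} (Q : ucq) (T : tbox) (Ab : fabox R)
  : set (seq indiv * R) :=
  [set p | p.2 = inf [set ucq_deg I Q p.1 | I in [set I : finterp R | is_model T Ab I]]
           /\ 0 < p.2].

Definition assert_indivs {R : realType} (f : fassert R) : seq indiv :=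
  match f with CA _ a _ => [:: a] | RA _ a b _ => [:: a; b] end.

(* individuals of A = domain of I_A *)
Definition adom {R : realType} (Ab : fabox R) (a : indiv) : Prop :=
  exists f, List.In f Ab /\ List.In a (assert_indivs f).

Definition term_ival (s : nat -> indiv) (t : term) : indiv :=
  match t with TV x => s x | TC a => a end.

Definition abox_atom_deg {R : realType} (Ab : fabox R) (s : nat -> indiv) (g : atom) : R :=
  match g with
  | QA A t => sup ([set 0] `|` [set v | List.In (CA A (term_ival s t) v) Ab])
  | QR r t1 t2 =>
      sup ([set 0] `|` [set v | List.In (RA r (term_ival s t1) (term_ival s t2) v) Ab])
  end.

Definition abox_cq_deg {R : realType} (Ab : fabox R) (q : cq) (tup : seq indiv) : R :=
  sup ([set 0] `|` [set conj_val (map (abox_atom_deg Ab s) (body q)) |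
        s in [set s : nat -> indiv |
               (forall x, var_of x q -> adom Ab (s x)) /\
               List.Forall2 (fun t a => term_ival s t = a) (head q) tup]]).

(* a UCQ given as a (possibly infinite) set of CQs *)
Definition abox_ucq_deg {R : realType} (Ab : fabox R) (Q : set cq) (tup : seq indiv) : R :=
  sup ([set 0] `|` [set abox_cq_deg Ab q tup | q in Q]).

Definition ans {R : realType} (Q : set cq) (Ab : fabox R) : set (seq indiv) :=
  [set tup | 0 < abox_ucq_deg Ab Q tup].

Definition fans {R : realType} (Q : set cq) (Ab : fabox R) : set (seq indiv * R) :=
  [set p | ans Q Ab p.1 /\ p.2 = abox_ucq_deg Ab Q p.1].

(* PerfectRef (Calvanese et al.), as the closure of the input UCQ      *)
Definition unbound (q : cq) (x : nat) : Prop :=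
  ~ List.In (TV x) (head q) /\
  exists g, List.In g (body q) /\ occ_atom x g /\
    (forall g', List.In g' (body q) -> occ_atom x g' -> g' = g) /\
    (match g with QR _ t1 t2 => ~ (t1 = TV x /\ t2 = TV x) | _ => True end).

Definition fresh (q : cq) (x : nat) : Prop := ~ var_of x q.

Inductive gr (q : cq) : atom -> incl -> atom -> Prop :=
| gr_A1 A A1 t : gr q (QA A t) (CIpos (BA A1) (BA A)) (QA A1 t)
| gr_A2 A P t z : fresh q z -> gr q (QA A t) (CIpos (BE (RP P)) (BA A)) (QR P t (TV z))
| gr_A3 A P t z : fresh q z -> gr q (QA A t) (CIpos (BE (RI P)) (BA A)) (QR P (TV z) t)
| gr_E1 P t y A : unbound q y ->
    gr q (QR P t (TV y)) (CIpos (BA A) (BE (RP P))) (QA A t)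
| gr_E2 P t y P1 z : unbound q y -> fresh q z ->
    gr q (QR P t (TV y)) (CIpos (BE (RP P1)) (BE (RP P))) (QR P1 t (TV z))
| gr_E3 P t y P1 z : unbound q y -> fresh q z ->
    gr q (QR P t (TV y)) (CIpos (BE (RI P1)) (BE (RP P))) (QR P1 (TV z) t)
| gr_I1 P t y A : unbound q y ->
    gr q (QR P (TV y) t) (CIpos (BA A) (BE (RI P))) (QA A t)
| gr_I2 P t y P1 z : unbound q y -> fresh q z ->
    gr q (QR P (TV y) t) (CIpos (BE (RP P1)) (BE (RI P))) (QR P1 t (TV z))
| gr_I3 P t y P1 z : unbound q y -> fresh q z ->
    gr q (QR P (TV y) t) (CIpos (BE (RI P1)) (BE (RI P))) (QR P1 (TV z) t)
| gr_R1 P P1 t1 t2 : gr q (QR P t1 t2) (RIpos (RP P1) (RP P)) (QR P1 t1 t2)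
| gr_R2 P P1 t1 t2 : gr q (QR P t1 t2) (RIpos (RI P1) (RI P)) (QR P1 t1 t2)
| gr_R3 P P1 t1 t2 : gr q (QR P t1 t2) (RIpos (RI P1) (RP P)) (QR P1 t2 t1)
| gr_R4 P P1 t1 t2 : gr q (QR P t1 t2) (RIpos (RP P1) (RI P)) (QR P1 t2 t1).

Definition subst := nat -> term.
Definition subst_term (s : subst) (t : term) : term :=
  match t with TV x => s x | TC a => TC a end.
Definition subst_atom (s : subst) (g : atom) : atom :=
  match g with
  | QA A t => QA A (subst_term s t)
  | QR r t1 t2 => QR r (subst_term s t1) (subst_term s t2)
  end.

Definition unifier (s : subst) (g1 g2 : atom) : Prop :=
  subst_atom s g1 = subst_atom s g2.

Definition mgu (s : subst) (g1 g2 : atom) : Prop :=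
  unifier s g1 g2 /\
  forall th : subst, unifier th g1 g2 ->
    exists rho : subst, forall x, th x = subst_term rho (s x).

Inductive perfect_ref (T : tbox) (Q : ucq) : cq -> Prop :=
| pr_init q : List.In q Q -> perfect_ref T Q q
| pr_atom q g ax g' b' :
    perfect_ref T Q q -> List.In g (body q) -> List.In ax T -> gr q g ax g' ->
    (forall h, List.In h b' <-> ((List.In h (body q) /\ h <> g) \/ h = g')) ->
    perfect_ref T Q (CQ (head q) b')
| pr_reduce q g1 g2 s b' :
    perfect_ref T Q q -> List.In g1 (body q) -> List.In g2 (body q) -> mgu s g1 g2 ->
    (forall h, List.In h b' <-> exists h0, List.In h0 (body q) /\ h = subst_atom s h0) ->
    perfect_ref T Q (CQ (map (subst_term s) (head q)) b').

Definition ref (Q : ucq) (T : tbox) : set cq := [set q | perfect_ref T Q q].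

(* Main.v *)
Require Import Defs.
From mathcomp Require Import all_boot all_order all_algebra.
From mathcomp Require Import boolp classical_sets reals.
From mathcomp Require Import ring lra.
From HB Require Import structures.
Import Order.TTheory GRing.Theory Num.Theory.
Set Implicit Arguments. Unset Strict Implicit.
Local Open Scope ring_scope.
Local Open Scope classical_set_scope.

Section SupHelp.
Context {R : realType}.

Lemma sup_ge_mem (E : set R) (b x : R) : (forall y, E y -> y <= b) -> E x -> x <= sup E.
Proof. by move=> hb Ex; apply: ub_le_sup => //; exists b. Qed.

Lemma sup_le_c (E : set R) (c : R) : E !=set0 -> (forall y, E y -> y <= c) -> sup E <= c.
Proof. by move=> ne hc; apply: ge_sup. Qed.

Lemma sup0U_ge0 (E : set R) (b : R) : 0 <= b -> (forall y, E y -> y <= b) -> 0 <= sup ([set 0] `|` E).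
Proof. move=> b0 hb; apply: (@sup_ge_mem _ b); last by left.
by move=> y [->|/hb]. Qed.

Lemma sup0U_le (E : set R) (c : R) : 0 <= c -> (forall y, E y -> y <= c) -> sup ([set 0] `|` E) <= c.
Proof. move=> c0 hc; apply: sup_le_c; first by exists 0; left.
by move=> y [->|/hc]. Qed.

Lemma sup0U_mem (E : set R) (b x : R) : (forall y, E y -> y <= b) -> 0 <= b -> E x -> x <= sup ([set 0] `|` E).
Proof. move=> hb b0 Ex; apply: (@sup_ge_mem _ b); last by right.
by move=> y [->|/hb]. Qed.

Lemma sup0U_gt (E : set R) (x : R) : 0 <= x -> x < sup ([set 0] `|` E) -> exists2 y, E y & x < y.
Proof. move=> x0 /sup_gt [|y [->|Ey] xy]; first by exists 0; left.
 by move: (lt_le_trans xy x0); rewrite ltxx. by exists y. Qed.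

Lemma le_eps (x y : R) : (forall e, 0 < e -> x - e <= y) -> x <= y.
Proof. move=> h; apply/ler_addgt0Pr => e e0; have := h e e0; by rewrite lerBlDr. Qed.

End SupHelp.

Section Conj.
Context {R : realType}.
Lemma conj_ge {A : Type} (f : A -> R) (b : seq A) (x : R) :
  x <= conj_val (map f b) <-> x <= 1 /\ forall g, List.In g b -> x <= f g.
Proof.
elim: b => [|g b IH] /=; first by split=> [->|[]].
rewrite /conj_val /= le_min -/(conj_val _); split.
  move=> /andP[h1 /IH [h2 h3]]; split=> // g' [<-|/h3] //.
move=> [h1 h2]; apply/andP; split; first by apply: h2; left.
by apply/IH; split=> // g' hg; apply: h2; right.
Qed.

Lemma conj_gt {A : Type} (f : A -> R) (b : seq A) (x : R) :
  x < conj_val (map f b) <-> x < 1 /\ forall g, List.In g b -> x < f g.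
Proof.
elim: b => [|g b IH] /=; first by split=> [->|[]].
rewrite /conj_val /= lt_min -/(conj_val _); split.
  move=> /andP[h1 /IH [h2 h3]]; split=> // g' [<-|/h3] //.
move=> [h1 h2]; apply/andP; split; first by apply: h2; left.
by apply/IH; split=> // g' hg; apply: h2; right.
Qed.

Lemma conj_le1 {A : Type} (f : A -> R) (b : seq A) : conj_val (map f b) <= 1.
Proof. by case: (proj1 (conj_ge f b _) (lexx _)). Qed.

Lemma conj_mono {A : Type} (f g : A -> R) (b : seq A) :
  (forall a, List.In a b -> f a <= g a) -> conj_val (map f b) <= conj_val (map g b).
Proof.
move=> h; apply/conj_ge; split; first exact: conj_le1.
move=> a ha; apply: le_trans (h a ha).
by case: (proj1 (conj_ge f b _) (lexx _)) => _ /(_ a ha).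
Qed.
End Conj.

Section Sound.
Context {R : realType}.
Implicit Types (I : finterp R).

Lemma role_basic_bnd I Q d : finterp_wf I -> forall e, 0 <= role_val I Q d e <= 1.
Proof. by move=> [_ [_ hr]] e; case: Q => r /=; apply: hr. Qed.

Lemma basic_val_le1 I B d : finterp_wf I -> basic_val I B d <= 1.
Proof.
move=> wf; case: B => [A|Q] /=; first by case: wf => _ [/(_ A d) /andP[]].
apply: sup_le_c; first by exists (role_val I Q d d); exists d.
by move=> y [e _ <-]; case/andP: (role_basic_bnd Q d wf e).
Qed.

Lemma role_le_basic I Q d e : finterp_wf I -> role_val I Q d e <= basic_val I (BE Q) d.
Proof.
move=> wf /=; apply: (@sup_ge_mem _ _ 1); last by exists e.
by move=> y [e' _ <-]; case/andP: (role_basic_bnd Q d wf e').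
Qed.

Lemma basic_val_ge0 I B d : finterp_wf I -> 0 <= basic_val I B d.
Proof.
move=> wf; case: B => [A|Q]; first by case: wf => _ [/(_ A d) /andP[]].
apply: le_trans (@role_le_basic I Q d d wf).
by case/andP: (role_basic_bnd Q d wf d).
Qed.

Lemma basic_witness I Q d eps : finterp_wf I -> 0 < eps ->
  exists e, basic_val I (BE Q) d - eps < role_val I Q d e.
Proof.
move=> wf e0 /=; have [|y [e _ <-] h] := @sup_adherent _ [set role_val I Q d e | e in [set: dom I]] eps e0.
  split; first by exists (role_val I Q d d); exists d.
  by exists 1 => y [e _ <-]; case/andP: (role_basic_bnd Q d wf e).
by exists e.
Qed.

Lemma atom_val_bnd I s g : finterp_wf I -> 0 <= atom_val I s g <= 1.
Proof. by case=> _ [hc hr]; case: g => [A t|r t1 t2] /=. Qed.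

Lemma cq_deg_bnd I q tup : finterp_wf I -> 0 <= cq_deg I q tup <= 1.
Proof.
move=> wf; apply/andP; split.
  by apply: (@sup0U_ge0 _ _ 1) => // y [s _ <-]; apply: conj_le1.
by apply: sup0U_le => // y [s _ <-]; apply: conj_le1.
Qed.

Lemma cq_deg_mem I q tup s : finterp_wf I ->
  List.Forall2 (fun t a => term_val I s t = iind I a) (Defs.head q) tup ->
  conj_val (map (atom_val I s) (body q)) <= cq_deg I q tup.
Proof.
move=> wf hs; apply: (@sup0U_mem _ _ 1) => //; last by exists s.
by move=> y [s' _ <-]; apply: conj_le1.
Qed.

Lemma ucq_deg_mem I Q q tup : finterp_wf I -> List.In q Q -> cq_deg I q tup <= ucq_deg I Q tup.
Proof.
move=> wf hq; apply: (@sup0U_mem _ _ 1) => //; last by exists q.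
by move=> y [q' _ <-]; case/andP: (cq_deg_bnd q' tup wf).
Qed.

Lemma ucq_deg_bnd I Q tup : finterp_wf I -> 0 <= ucq_deg I Q tup <= 1.
Proof.
move=> wf; apply/andP; split.
  by apply: (@sup0U_ge0 _ _ 1) => // y [q _ <-]; case/andP: (cq_deg_bnd q tup wf).
by apply: sup0U_le => // y [q _ <-]; case/andP: (cq_deg_bnd q tup wf).
Qed.

Definition upd {D : Type} (s : nat -> D) (y : nat) (e : D) : nat -> D :=
  fun z => if z == y then e else s z.

Lemma term_val_upd I s y e t : t <> TV y -> term_val I (upd s y e) t = term_val I s t.
Proof. case: t => //= z hz; rewrite /upd; case: eqP => [ez|//]; by subst. Qed.

Lemma atom_val_ext I s s' h : (forall x, occ_atom x h -> s x = s' x) -> atom_val I s h = atom_val I s' h.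
Proof.
case: h => [A [x|a]|r [x|a] [x'|a']] /= H; rewrite ?H //; try by [left|right].
Qed.

Lemma unbound_upd I q y g e s : unbound q y -> List.In g (body q) -> occ_atom y g ->
  (forall h, List.In h (body q) -> h <> g -> atom_val I (upd s y e) h = atom_val I s h) /\
  (forall t, List.In t (Defs.head q) -> term_val I (upd s y e) t = term_val I s t).
Proof.
move=> [nh [g0 [g0in [occ0 [uniq0 _]]]]] gin occg.
have eg : g = g0 by apply: uniq0.
split.
  move=> h hin hne; apply: atom_val_ext => x ox; rewrite /upd; case: eqP => // ex.
  by subst x; case: hne; rewrite eg; apply: uniq0.
by move=> t tin; apply: term_val_upd => et; subst t.
Qed.

Lemma le_subeps (a b e : R) : a <= b -> 0 < e -> a - e <= b.
Proof. by move=> ab e0; rewrite lerBlDr; apply: (le_trans ab); rewrite lerDl ltW. Qed.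

Lemma lt_subeps (a b c e : R) : a <= b -> b - e < c -> a - e <= c.
Proof. by move=> ab bc; apply: ltW; apply: le_lt_trans bc; rewrite lerD2r. Qed.

Lemma unbound_r q y P t : unbound q y -> List.In (QR P t (TV y)) (body q) -> t <> TV y.
Proof.
move=> [_ [g0 [_ [_ [u hh]]]]] gin et; subst t.
by have eg := u _ gin (or_intror erefl); subst g0; apply: hh.
Qed.

Lemma unbound_l q y P t : unbound q y -> List.In (QR P (TV y) t) (body q) -> t <> TV y.
Proof.
move=> [_ [g0 [_ [_ [u hh]]]]] gin et; subst t.
by have eg := u _ gin (or_introl erefl); subst g0; apply: hh.
Qed.

Lemma gr_sound I q g ax g' s eps : finterp_wf I -> sat_incl I ax -> gr q g ax g' ->
  List.In g (body q) -> 0 < eps ->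
  exists s', atom_val I s g' - eps <= atom_val I s' g /\
    (forall h, List.In h (body q) -> h <> g -> atom_val I s' h = atom_val I s h) /\
    (forall t, List.In t (Defs.head q) -> term_val I s' t = term_val I s t).
Proof.
move=> wf sat hgr gin e0.
have triv : atom_val I s g' <= atom_val I s g ->
  exists s', atom_val I s g' - eps <= atom_val I s' g /\
    (forall h, List.In h (body q) -> h <> g -> atom_val I s' h = atom_val I s h) /\
    (forall t, List.In t (Defs.head q) -> term_val I s' t = term_val I s t).
  by move=> le; exists s; split=> //; apply: le_subeps.
case: hgr sat triv gin.
- by move=> A A1 t /= H triv _; apply: triv; apply: H.
- move=> A P t z _ /= H triv _; apply: triv; apply: le_trans (H _).
  exact: (@role_le_basic I (RP P)).
- move=> A P t z _ /= H triv _; apply: triv; apply: le_trans (H _).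
  exact: (@role_le_basic I (RI P)).
- move=> P t y A ub /= H _ gin.
  have [e he] := @basic_witness I (RP P) (term_val I s t) eps wf e0.
  have [h2 h3] := @unbound_upd I q y _ e s ub gin (or_intror erefl).
  exists (upd s y e); split=> //=.
  rewrite term_val_upd; last exact: (unbound_r ub gin).
  by rewrite /upd eqxx; apply: lt_subeps he; apply: H.
- move=> P t y P1 z ub _ /= H _ gin.
  have [e he] := @basic_witness I (RP P) (term_val I s t) eps wf e0.
  have [h2 h3] := @unbound_upd I q y _ e s ub gin (or_intror erefl).
  exists (upd s y e); split=> //=.
  rewrite term_val_upd; last exact: (unbound_r ub gin).
  rewrite /upd eqxx; apply: lt_subeps he; apply: le_trans (H _).
  exact: (@role_le_basic I (RP P1)).
- move=> P t y P1 z ub _ /= H _ gin.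
  have [e he] := @basic_witness I (RP P) (term_val I s t) eps wf e0.
  have [h2 h3] := @unbound_upd I q y _ e s ub gin (or_intror erefl).
  exists (upd s y e); split=> //=.
  rewrite term_val_upd; last exact: (unbound_r ub gin).
  rewrite /upd eqxx; apply: lt_subeps he; apply: le_trans (H _).
  exact: (@role_le_basic I (RI P1)).
- move=> P t y A ub /= H _ gin.
  have [e he] := @basic_witness I (RI P) (term_val I s t) eps wf e0.
  have [h2 h3] := @unbound_upd I q y _ e s ub gin (or_introl erefl).
  exists (upd s y e); split=> //=.
  rewrite term_val_upd; last exact: (unbound_l ub gin).
  by rewrite /upd eqxx; apply: lt_subeps he; apply: H.
- move=> P t y P1 z ub _ /= H _ gin.
  have [e he] := @basic_witness I (RI P) (term_val I s t) eps wf e0.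
  have [h2 h3] := @unbound_upd I q y _ e s ub gin (or_introl erefl).
  exists (upd s y e); split=> //=.
  rewrite term_val_upd; last exact: (unbound_l ub gin).
  rewrite /upd eqxx; apply: lt_subeps he; apply: le_trans (H _).
  exact: (@role_le_basic I (RP P1)).
- move=> P t y P1 z ub _ /= H _ gin.
  have [e he] := @basic_witness I (RI P) (term_val I s t) eps wf e0.
  have [h2 h3] := @unbound_upd I q y _ e s ub gin (or_introl erefl).
  exists (upd s y e); split=> //=.
  rewrite term_val_upd; last exact: (unbound_l ub gin).
  rewrite /upd eqxx; apply: lt_subeps he; apply: le_trans (H _).
  exact: (@role_le_basic I (RI P1)).
- by move=> P P1 t1 t2 /= H triv _; apply: triv; apply: H.
- by move=> P P1 t1 t2 /= H triv _; apply: triv; apply: H.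
- by move=> P P1 t1 t2 /= H triv _; apply: triv; apply: H.
- by move=> P P1 t1 t2 /= H triv _; apply: triv; apply: H.
Qed.

Lemma Forall2_in {A B : Type} (P P' : A -> B -> Prop) l1 l2 :
  (forall a b, List.In a l1 -> P a b -> P' a b) -> List.Forall2 P l1 l2 -> List.Forall2 P' l1 l2.
Proof.
move=> H h; elim: h H => [|a b l1' l2' pab _ IH] H; constructor.
  by apply: H => //; left.
by apply: IH => a' b' ha; apply: H; right.
Qed.

Lemma Forall2_map_l {A A' B : Type} (f : A -> A') (P : A' -> B -> Prop) l1 l2 :
  List.Forall2 P (map f l1) l2 -> List.Forall2 (fun a b => P (f a) b) l1 l2.
Proof.
elim: l1 l2 => [|a l1 IH] [|b l2] h; inversion h; subst; constructor => //.
exact: IH.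
Qed.

Lemma Forall2_map_r {A A' B : Type} (f : A -> A') (P : A' -> B -> Prop) l1 l2 :
  List.Forall2 (fun a b => P (f a) b) l1 l2 -> List.Forall2 P (map f l1) l2.
Proof. by elim=> [|a b l1' l2' h _ IH] /=; constructor. Qed.

Lemma step_atom I q g ax g' b' tup : finterp_wf I -> sat_incl I ax ->
  List.In g (body q) -> gr q g ax g' ->
  (forall h, List.In h b' <-> ((List.In h (body q) /\ h <> g) \/ h = g')) ->
  cq_deg I (CQ (Defs.head q) b') tup <= cq_deg I q tup.
Proof.
move=> wf sat gin hgr hb'.
apply: sup0U_le; first by case/andP: (cq_deg_bnd q tup wf).
move=> _ [s hs <-]; apply: le_eps => e e0.
have [s' [h1 [h2 h3]]] := gr_sound s wf sat hgr gin e0.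
apply: le_trans (cq_deg_mem wf _); last first.
  by apply: Forall2_in hs => t a tin /= <-; apply: h3.
have [c1 c2] := proj1 (conj_ge (atom_val I s) b' _) (lexx _).
apply/conj_ge; split; first by apply: le_subeps.
move=> h hin; have [->|hne] := pselect (h = g).
  apply: le_trans h1; rewrite lerD2r; apply: c2; apply/hb'; by right.
rewrite h2 //; apply: le_subeps e0; apply: c2; apply/hb'; by left.
Qed.

Lemma term_val_subst I s sg t :
  term_val I s (subst_term sg t) = term_val I (fun z => term_val I s (sg z)) t.
Proof. by case: t. Qed.

Lemma atom_val_subst I s sg h :
  atom_val I s (subst_atom sg h) = atom_val I (fun z => term_val I s (sg z)) h.
Proof. by case: h => [A t|r t1 t2] /=; rewrite ?term_val_subst. Qed.

Lemma step_reduce I q sg b' tup : finterp_wf I ->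
  (forall h, List.In h b' <-> exists h0, List.In h0 (body q) /\ h = subst_atom sg h0) ->
  cq_deg I (CQ (map (subst_term sg) (Defs.head q)) b') tup <= cq_deg I q tup.
Proof.
move=> wf hb'.
apply: sup0U_le; first by case/andP: (cq_deg_bnd q tup wf).
move=> _ [s hs <-].
apply: le_trans (cq_deg_mem (s := fun z => term_val I s (sg z)) wf _); last first.
  by move: (Forall2_map_l hs); apply: Forall2_in => t a _ /=; rewrite term_val_subst.
have [c1 c2] := proj1 (conj_ge (atom_val I s) b' _) (lexx _).
apply/conj_ge; split=> // h hin; rewrite -atom_val_subst; apply: c2.
by apply/hb'; exists h.
Qed.

Lemma ref_sound I T Ab Q q tup : is_model T Ab I -> perfect_ref T Q q ->
  cq_deg I q tup <= ucq_deg I Q tup.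
Proof.
move=> [wf [satT _]] hq; elim: hq tup => {q}.
- by move=> q qin tup; apply: ucq_deg_mem.
- move=> q g ax g' b' _ IH gin axin hgr hb' tup.
  by apply: le_trans (IH tup); apply: step_atom hgr hb' => //; apply: satT.
- move=> q g1 g2 sg b' _ IH _ _ _ hb' tup.
  by apply: le_trans (IH tup); apply: step_reduce.
Qed.

Lemma abox_sound I T Ab q tup : is_model T Ab I ->
  abox_cq_deg Ab q tup <= cq_deg I q tup.
Proof.
move=> [wf [_ satA]].
apply: sup0U_le; first by case/andP: (cq_deg_bnd q tup wf).
move=> _ [s [_ hs] <-].
apply: le_trans (cq_deg_mem (s := fun z => iind I (s z)) wf _); last first.
  by apply: Forall2_in hs => t a _ <-; case: t.
apply: conj_mono => g _.
have tv : forall t, term_val I (fun z => iind I (s z)) t = iind I (term_ival s t) by case.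
case: g => [A t|r t1 t2] /=; rewrite ?tv.
  apply: sup0U_le; first by case: wf => _ [/(_ A (iind I (term_ival s t))) /andP[]].
  by move=> v /satA.
apply: sup0U_le; first by case: wf => _ [_ /(_ r (iind I (term_ival s t1)) (iind I (term_ival s t2))) /andP[]].
by move=> v /satA.
Qed.

Lemma sound_all I T Ab Q tup : is_model T Ab I ->
  abox_ucq_deg Ab (ref Q T) tup <= ucq_deg I Q tup.
Proof.
move=> hm; have wf := proj1 hm.
apply: sup0U_le; first by case/andP: (ucq_deg_bnd Q tup wf).
move=> _ [q hq <-]; apply: le_trans (abox_sound q tup hm) (ref_sound tup hm hq).
Qed.
End Sound.

Inductive elt : Type := Named of indiv | Anon of elt & basic & role.
Inductive fact : Type := FC of cname & elt | FR of rname & elt & elt.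

Definition rfact (Q : role) (d e : elt) : fact :=
  match Q with RP P => FR P d e | RI P => FR P e d end.

Section Canon.
Context {R : realType} (T : tbox) (Ab : fabox R).

Inductive der : nat -> R -> fact -> Prop :=
| der_c A a v : List.In (CA A a v) Ab -> der 0 v (FC A (Named a))
| der_r r a b v : List.In (RA r a b v) Ab -> der 0 v (FR r (Named a) (Named b))
| der_ciA k v A1 A d : List.In (CIpos (BA A1) (BA A)) T -> der k v (FC A1 d) -> der k.+1 v (FC A d)
| der_ciE k v Q A d e : List.In (CIpos (BE Q) (BA A)) T -> der k v (rfact Q d e) -> der k.+1 v (FC A d)
| der_ceA k v A1 Q d : List.In (CIpos (BA A1) (BE Q)) T -> der k v (FC A1 d) ->
    der k.+1 v (rfact Q d (Anon d (BA A1) Q))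
| der_ceE k v Q1 Q d e : List.In (CIpos (BE Q1) (BE Q)) T -> der k v (rfact Q1 d e) ->
    der k.+1 v (rfact Q d (Anon d (BE Q1) Q))
| der_ri k v Q1 Q2 d e : List.In (RIpos Q1 Q2) T -> der k v (rfact Q1 d e) -> der k.+1 v (rfact Q2 d e).

Definition bder (k : nat) (v : R) (B : basic) (d : elt) : Prop :=
  match B with BA A => der k v (FC A d) | BE Q => exists e, der k v (rfact Q d e) end.

Lemma der_ci k v B A d : List.In (CIpos B (BA A)) T -> bder k v B d -> der k.+1 v (FC A d).
Proof. case: B => [A1|Q] /= hT; first exact: der_ciA. by case=> e; apply: der_ciE. Qed.

Lemma der_ce k v B Q d : List.In (CIpos B (BE Q)) T -> bder k v B d -> der k.+1 v (rfact Q d (Anon d B Q)).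
Proof. case: B => [A1|Q1] /= hT; first exact: der_ceA. by case=> e; apply: der_ceE. Qed.

Definition I0 : finterp R := @FInterp R elt Named
  (fun A d => sup ([set 0] `|` [set v | exists k, der k v (FC A d)]))
  (fun P d e => sup ([set 0] `|` [set v | exists k, der k v (FR P d e)])).

Hypothesis Hdeg : forall f, List.In f Ab -> assert_deg_ok f.

Lemma der_bnd k v f : der k v f -> 0 <= v <= 1.
Proof.
elim=> //.
- move=> A a v' /Hdeg /=; case: A => [n||] //=; try by move=> ->; rewrite ler01 lexx.
- move=> r a b v' /Hdeg /=; case: r => [n|n|||] //=; by move=> ->; rewrite ler01 lexx.
Qed.

Lemma role_val_I0 Q d e :
  role_val I0 Q d e = sup ([set 0] `|` [set v | exists k, der k v (rfact Q d e)]).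
Proof. by case: Q. Qed.

Lemma I0_wf : finterp_wf I0.
Proof.
split; first by move=> a b [].
split=> [A d|r d e] /=; (apply/andP; split;
  [apply: (@sup0U_ge0 _ _ 1) => // y [k /der_bnd /andP[_ ->]]
  |apply: sup0U_le => // y [k /der_bnd /andP[_ ->]]]).
all: by [].
Qed.

Lemma rval_ge k v Q d e : der k v (rfact Q d e) -> v <= role_val I0 Q d e.
Proof.
move=> h; rewrite role_val_I0; apply: (@sup0U_mem _ _ 1) => //; last by exists k.
by move=> y [k' /der_bnd /andP[]].
Qed.

Lemma rval_le Q d e c : 0 <= c -> (forall k v, der k v (rfact Q d e) -> v <= c) -> role_val I0 Q d e <= c.
Proof. by move=> c0 h; rewrite role_val_I0; apply: sup0U_le => // y [k /h]. Qed.

Lemma bval_ge k v B d : bder k v B d -> v <= basic_val I0 B d.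
Proof.
case: B => [A|Q] /=.
  move=> h; apply: (@sup0U_mem _ _ 1) => //; last by exists k.
  by move=> y [k' /der_bnd /andP[]].
case=> e /rval_ge h; apply: le_trans h _; apply: role_le_basic; exact: I0_wf.
Qed.

Lemma bval_le B d c : 0 <= c -> (forall k v, bder k v B d -> v <= c) -> basic_val I0 B d <= c.
Proof.
move=> c0 h; case: B h => [A|Q] /= h.
  by apply: sup0U_le => // y [k /h].
apply: sup_le_c; first by exists (role_val I0 Q d d); exists d.
move=> _ [e _ <-]; apply: rval_le => // k v hd; apply: (h k); by exists e.
Qed.


Section Hom.
Context (M : finterp R) (wfM : finterp_wf M) (satT : forall ax, List.In ax T -> sat_incl M ax)
  (satA : forall f, List.In f Ab -> sat_assert M f) (eps : R) (e0 : 0 < eps).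

Fixpoint hM (x : elt) : dom M :=
  match x with
  | Named a => iind M a
  | Anon d B Q => proj1_sig (cid (basic_witness Q (hM d) wfM e0))
  end.

Lemma hM_spec d B Q : basic_val M (BE Q) (hM d) - eps < role_val M Q (hM d) (hM (Anon d B Q)).
Proof. exact: (proj2_sig (cid (basic_witness Q (hM d) wfM e0))). Qed.

Definition Mval (f : fact) : R :=
  match f with FC A d => iconc M A (hM d) | FR P d e => irole M P (hM d) (hM e) end.

Lemma Mval_r Q d e : Mval (rfact Q d e) = role_val M Q (hM d) (hM e).
Proof. by case: Q. Qed.

Lemma der_hom k v f : der k v f -> v - k%:R * eps <= Mval f.
Proof.
have step : forall (k : nat) (a b : R), a - k%:R * eps <= b -> a - k.+1%:R * eps <= b.
  move=> k' a b h; apply: le_trans h; rewrite lerD2l lerN2 ler_pM2r // ler_nat //.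
elim=> {k v f}.
- by move=> A a v /satA /=; rewrite mul0r subr0.
- by move=> r a b v /satA /=; rewrite mul0r subr0.
- move=> k v A1 A d /satT /= H _ IH; apply: step; apply: le_trans IH _; exact: H.
- move=> k v Q A d e /satT /= H _ IH; apply: step; apply: le_trans IH _.
  rewrite Mval_r; apply: le_trans (H _); exact: role_le_basic.
- move=> k v A1 Q d /satT /= H _ IH; rewrite Mval_r.
  have h1 := hM_spec d (BA A1) Q.
  apply: ltW; apply: le_lt_trans h1; rewrite mulrSr mulrDl mul1r opprD addrA lerD2r.
  by apply: le_trans IH _; apply: H.
- move=> k v Q1 Q d e /satT /= H _ IH; rewrite Mval_r.
  have h1 := hM_spec d (BE Q1) Q.
  apply: ltW; apply: le_lt_trans h1; rewrite mulrSr mulrDl mul1r opprD addrA lerD2r.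
  apply: le_trans IH _; rewrite Mval_r; apply: le_trans (H _); exact: role_le_basic.
- move=> k v Q1 Q2 d e /satT /= H _ IH; apply: step; apply: le_trans IH _.
  rewrite !Mval_r; exact: H.
Qed.

Lemma bder_hom k v B d : bder k v B d -> v - k%:R * eps <= basic_val M B (hM d).
Proof.
case: B => [A|Q] /=; first exact: der_hom.
case=> e /der_hom; rewrite Mval_r => h; apply: le_trans h _; exact: role_le_basic.
Qed.
End Hom.

Lemma eps_small (N : nat) (e : R) : 0 < e -> exists2 eps : R, 0 < eps & N%:R * eps <= e.
Proof.
move=> e0; exists (e / N.+1%:R); first by rewrite divr_gt0.
rewrite mulrCA ger_pMr // ler_pdivrMr // mul1r ler_nat //.
Qed.

Lemma swap1 (x y : R) : (x <= 1 - y) = (y <= 1 - x).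
Proof. by rewrite !lerBrDr addrC. Qed.

Lemma I0_model : is_FAKB T Ab -> satisfiable T Ab -> is_model T Ab I0.
Proof.
move=> _ [M [wfM [satT satA]]].
have key : forall k1 v1 k2 v2 (x1 x2 : R),
   (forall eps (e0 : 0 < eps), exists a b : R, v1 - k1%:R * eps <= a /\ v2 - k2%:R * eps <= b /\ a <= 1 - b) ->
   v1 <= 1 - v2.
  move=> k1 v1 k2 v2 _ _ H; rewrite lerBrDr; apply: le_eps => e e0.
  have [eps ep0 hep] := eps_small (k1 + k2) e0.
  have [a [b [ha [hb hab]]]] := H eps ep0.
  rewrite lerBlDr; apply: (le_trans (y := a + b + (k1 + k2)%:R * eps)).
    rewrite natrD mulrDl; set x1 := k1%:R * eps in ha *; set x2 := k2%:R * eps in hb *.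
    have := lerD ha hb; rewrite -!lerBlDr; congr (_ <= _); ring.
  by rewrite lerD // -lerBrDr.
split; first exact: I0_wf.
split; last first.
  case=> [A a v|r a b v] hin /=; apply: (@sup0U_mem _ _ 1) => //;
    try (by move=> y [k /der_bnd /andP[_ ->]]); by exists 0%N; constructor.
case=> [B1 B2|B1 B2|Q1 Q2|Q1 Q2] hin /=.
- move=> d; apply: bval_le; first exact: basic_val_ge0 I0_wf.
  move=> k v hb; apply: (bval_ge (k:=k.+1)); case: B2 hin => [A|Q] hin /=.
    exact: der_ci hin hb.
  by exists (Anon d B1 Q); exact: der_ce hin hb.
- move=> d; apply: bval_le; first by rewrite subr_ge0; apply: basic_val_le1 I0_wf.
  move=> k1 v1 hb1; rewrite swap1; apply: bval_le.
    by rewrite subr_ge0; apply: le_trans (bval_ge hb1) _; apply: basic_val_le1 I0_wf.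
  move=> k2 v2 hb2; apply: (key k2 v2 k1 v1 0 0) => eps e0.
  exists (basic_val M B2 (hM wfM e0 (d))), (basic_val M B1 (hM wfM e0 d)).
  split; first exact: bder_hom.
  split; first exact: bder_hom.
  by rewrite swap1; apply: (satT _ hin).
- move=> d e; apply: rval_le.
    by case/andP: (@role_basic_bnd _ I0 Q2 d I0_wf e) => ->.
  move=> k v hd; apply: (rval_ge (k := k.+1)); exact: der_ri hin hd.
- move=> d e; apply: rval_le.
    by rewrite subr_ge0; case/andP: (@role_basic_bnd _ I0 Q2 d I0_wf e) => _ ->.
  move=> k1 v1 hb1; rewrite swap1; apply: rval_le.
    by rewrite subr_ge0; apply: le_trans (rval_ge hb1) _; case/andP: (@role_basic_bnd _ I0 Q1 d I0_wf e) => _ ->.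
  move=> k2 v2 hb2; apply: (key k2 v2 k1 v1 0 0) => eps e0.
  exists (role_val M Q2 (hM wfM e0 d) (hM wfM e0 e)), (role_val M Q1 (hM wfM e0 d) (hM wfM e0 e)).
  split; first by rewrite -Mval_r; exact: der_hom.
  split; first by rewrite -Mval_r; exact: der_hom.
  by rewrite swap1; apply: (satT _ hin).
Qed.
End Canon.
Local Open Scope nat_scope.

Definition atom_eq_dec (x y : atom) : {x = y} + {x <> y}.
Proof. do !decide equality. Defined.
Definition atom_eqb (x y : atom) : bool := if atom_eq_dec x y then true else false.
Lemma atom_eqP : Equality.axiom atom_eqb.
Proof. by move=> x y; rewrite /atom_eqb; case: atom_eq_dec => h; constructor. Qed.
HB.instance Definition _ := hasDecEq.Build atom atom_eqP.

Lemma In_mem {X : eqType} (x : X) l : List.In x l -> x \in l.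
Proof. elim: l => //= a l IH [->|/IH h]; by rewrite in_cons ?eqxx ?h ?orbT. Qed.

Lemma mem_In {X : eqType} (x : X) l : x \in l -> List.In x l.
Proof. elim: l => //= a l IH; rewrite in_cons => /orP[/eqP->|/IH h]; by [left|right]. Qed.

Lemma In_filter {X : Type} (p : pred X) x l : List.In x (filter p l) <-> List.In x l /\ p x.
Proof.
elim: l => [|a l IH] /=; first by split=> [|[]].
case: ifP => pa /=.
  split; first by case=> [<-|/IH [h1 h2]]; split=> //; [left|right].
  by case=> [[<-|h] px]; [left|right; apply/IH].
split; first by case/IH=> h1 h2; split=> //; right.
by case=> [[<-|h] px]; [rewrite pa in px|apply/IH].
Qed.

Lemma sumn_filter_le {X : Type} (f : X -> nat) (p : pred X) l :
  sumn (map f (filter p l)) <= sumn (map f l).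
Proof. elim: l => //= a l IH; case: ifP => _ /=; [rewrite leq_add2l|apply: leq_trans IH (leq_addl _ _)] => //. Qed.

Lemma sumn_filter_neq (f : atom -> nat) g l : List.In g l ->
  sumn (map f (filter (fun h => h != g) l)) + f g <= sumn (map f l).
Proof.
elim: l => //= a l IH [ea|gin].
  subst a; rewrite eqxx /= addnC leq_add2l; exact: sumn_filter_le.
case: eqP => [->|_] /=.
  rewrite addnC leq_add2l; exact: sumn_filter_le.
by rewrite -addnA leq_add2l IH.
Qed.

Lemma exists_max {X : Type} (f : X -> nat) (l : seq X) x0 : List.In x0 l ->
  exists2 a, List.In a l & forall b, List.In b l -> f b <= f a.
Proof.
elim: l x0 => // a l IH x0 _; case: l IH => [|b l] IH.
  by exists a => [|b [<-|]//]; left.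
have [c cin hc] := IH b (or_introl erefl).
case: (leqP (f c) (f a)) => hle.
  by exists a => [|b' [<-|/hc h]] //; [left|apply: leq_trans h hle].
exists c => [|b' [<-|/hc h]] //; [right|apply: ltnW] => //.
Qed.

Definition tvars (t : term) : seq nat := match t with TV x => [:: x] | TC _ => [::] end.
Definition avars (g : atom) : seq nat :=
  match g with QA _ t => tvars t | QR _ t1 t2 => tvars t1 ++ tvars t2 end.
Definition bvars (q : cq) : seq nat := flatten (map avars (body q)).
Definition hvars (q : cq) : seq nat := flatten (map tvars (Defs.head q)).

Lemma mem_tvars x t : x \in tvars t <-> t = TV x.
Proof. case: t => [y|a] /=; rewrite ?inE; split => //; [by move/eqP->|by case=> ->]. Qed.

Lemma occ_avars x g : occ_atom x g <-> x \in avars g.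
Proof.
case: g => [A t|r t1 t2] /=; first by rewrite mem_tvars.
rewrite mem_cat; split.
  by case=> /mem_tvars h; rewrite h ?orbT.
by case/orP => /mem_tvars h; [left|right].
Qed.

Lemma mem_flatten_map {X : Type} (f : X -> seq nat) x l :
  x \in flatten (map f l) <-> exists2 a, List.In a l & x \in f a.
Proof.
elim: l => [|a l IH] /=; first by split=> // [[]].
rewrite mem_cat; split.
  by case/orP=> [h|/IH [b bin hb]]; [exists a => //; left|exists b => //; right].
by case=> b [<-|bin] hb; apply/orP; [left|right; apply/IH; exists b].
Qed.

Lemma var_of_mem x q : var_of x q -> x \in hvars q ++ bvars q.
Proof.
rewrite mem_cat; case=> [h|[g [gin og]]]; apply/orP; [left|right].
  by apply/mem_flatten_map; exists (TV x) => //; rewrite inE.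
by apply/mem_flatten_map; exists g => //; apply/occ_avars.
Qed.

Lemma mem_le_sumn x l : x \in l -> x <= sumn l.
Proof.
elim: l => //= a l IH; rewrite in_cons => /orP[/eqP->|/IH h]; first exact: leq_addr.
by apply: leq_trans h (leq_addl _ _).
Qed.

Lemma exists_fresh q : exists z, fresh q z.
Proof.
exists (sumn (hvars q ++ bvars q)).+1 => /var_of_mem /mem_le_sumn.
by rewrite ltnn.
Qed.

Lemma gr_keep q g ax g' x : gr q g ax g' -> occ_atom x g -> List.In (TV x) (Defs.head q) -> occ_atom x g'.
Proof.
case.
- by move=> A A1 t.
- by move=> A P t z _ /= ->; left.
- by move=> A P t z _ /= ->; right.
- move=> P t y A [nh _] /= [->|[ey]] //; subst; by move/nh.
- move=> P t y P1 z [nh _] _ /= [->|[ey]]; [by left|subst; by move/nh].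
- move=> P t y P1 z [nh _] _ /= [->|[ey]]; [by right|subst; by move/nh].
- move=> P t y A [nh _] /= [[ey]|->] //; subst; by move/nh.
- move=> P t y P1 z [nh _] _ /= [[ey]|->]; [subst; by move/nh|by left].
- move=> P t y P1 z [nh _] _ /= [[ey]|->]; [subst; by move/nh|by right].
- by move=> P P1 t1 t2.
- by move=> P P1 t1 t2.
- by move=> P P1 t1 t2 /= [] ->; [right|left].
- by move=> P P1 t1 t2 /= [] ->; [right|left].
Qed.

Lemma ref_safe T Q q : ucq_safe Q -> perfect_ref T Q q -> cq_safe q.
Proof.
move=> hQ; elim=> {q}.
- by move=> q /hQ.
- move=> q g ax g' b' _ IH gin _ hgr hb' x /= xh.
  have [g0 [g0in o0]] := IH x xh.
  have [e|ne] := pselect (g0 = g).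
    subst g0; exists g'; split; [by apply/hb'; right|exact: gr_keep hgr o0 xh].
  by exists g0; split=> //; apply/hb'; left.
- move=> q g1 g2 sg b' _ IH _ _ _ hb' x /= xh.
  have [t [tin et]] : exists t, List.In t (Defs.head q) /\ subst_term sg t = TV x.
    by move: xh; elim: (Defs.head q) => //= a l IHl [<-|/IHl [t [tin et]]]; [exists a; split=> //; left|exists t; split=> //; right].
  case: t tin et => [x0|a] tin //= et.
  have [g0 [g0in o0]] := IH x0 tin.
  exists (subst_atom sg g0); split; first by apply/hb'; exists g0.
  case: g0 o0 {g0in} => [A t|r t1 t2] /=; first by move=> ->; rewrite /= et.
  by case=> ->; rewrite /= et; [left|right].
Qed.

Definition sub1 (x : nat) (t : term) : subst := fun z => if z == x then t else TV z.

Lemma sub1_ne x t u : u <> TV x -> subst_term (sub1 x t) u = u.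
Proof. by case: u => [z|a] //= hz; rewrite /sub1; case: eqP => // ez; subst. Qed.

Lemma sub1_mgu_gen x t g1 g2 : unifier (sub1 x t) g1 g2 ->
  (forall th, unifier th g1 g2 -> th x = subst_term th t) -> mgu (sub1 x t) g1 g2.
Proof.
move=> hu H; split=> // th /H hth; exists th => z; rewrite /sub1.
by case: eqP => [->|].
Qed.

Lemma mgu_pos1 P x t b : t <> TV x -> b <> TV x ->
  mgu (sub1 x t) (QR P (TV x) b) (QR P t b).
Proof.
move=> ht hb; apply: sub1_mgu_gen.
  by rewrite /unifier /= !sub1_ne // /sub1 eqxx.
by move=> th [].
Qed.

Lemma mgu_pos2 P x t a : t <> TV x -> a <> TV x ->
  mgu (sub1 x t) (QR P a (TV x)) (QR P a t).
Proof.
move=> ht ha; apply: sub1_mgu_gen.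
  by rewrite /unifier /= !sub1_ne // /sub1 eqxx.
by move=> th [].
Qed.

Definition tval (s : nat -> elt) (t : term) : elt :=
  match t with TV x => s x | TC a => Named a end.

Definition fact_of (s : nat -> elt) (g : atom) : fact :=
  match g with
  | QA A t => FC A (tval s t)
  | QR r t1 t2 => FR r (tval s t1) (tval s t2)
  end.

Lemma fact_of_ext s s' h : (forall x, occ_atom x h -> s x = s' x) -> fact_of s h = fact_of s' h.
Proof.
case: h => [A [x|a]|r [x|a] [x'|a']] /= H; rewrite ?H //; try by [left|right].
Qed.

Lemma tval_subst s sg t : (forall z, tval s (sg z) = s z) -> tval s (subst_term sg t) = tval s t.
Proof. by move=> H; case: t. Qed.

Lemma fact_of_subst s sg h : (forall z, tval s (sg z) = s z) -> fact_of s (subst_atom sg h) = fact_of s h.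
Proof. by move=> H; case: h => [A t|r t1 t2] /=; rewrite !tval_subst. Qed.

Fixpoint esize (d : elt) : nat := match d with Named _ => 0 | Anon d _ _ => (esize d).+1 end.
Lemma anon_neq d B Q : d <> Anon d B Q.
Proof. by move/(congr1 esize) => /= /eqP; rewrite -[X in X == _]addn0 -addn1 eqn_add2l. Qed.

Definition fmentions (n : elt) (f : fact) : Prop :=
  match f with FC _ x => x = n | FR _ x y => x = n \/ y = n end.

Lemma rfact_mentions Q x y n : fmentions n (rfact Q x y) <-> x = n \/ y = n.
Proof. by case: Q => P /=; split; case; by [left|right]. Qed.
Local Open Scope ring_scope.

Section Compl.
Context {R : realType} (T : tbox) (Ab : fabox R).
Local Notation dr := (der T Ab).
Local Notation bdr := (bder T Ab).

Lemma der_mentions j w f : dr j w f -> forall d B Q, fmentions (Anon d B Q) f ->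
  exists i, (i < j)%N /\ bdr i w B d /\ (i.+1 = j -> f = rfact Q d (Anon d B Q)).
Proof.
have lift : forall (k : nat) (w : R) f d B Q, (exists i, (i < k)%N /\ bdr i w B d) ->
   exists i, (i < k.+1)%N /\ bdr i w B d /\ (i.+1 = k.+1 -> f = rfact Q d (Anon d B Q)).
  move=> k w' f' d B Q [i [ik hb]]; exists i; split; first exact: ltnW.
  by split=> // [[ei]]; subst i; rewrite ltnn in ik.
elim=> {j w f}.
- by move=> A a v _ d B Q /=.
- by move=> r a b v _ d B Q /= [].
- move=> k v A1 A d0 _ _ IH d B Q /= e0; subst d0.
  by apply: lift; case: (IH d B Q erefl) => i [ik [hb _]]; exists i.
- move=> k v Q' A d0 e _ _ IH d B Q /= e0; subst d0.
  by apply: lift; case: (IH d B Q (proj2 (rfact_mentions _ _ _ _) (or_introl erefl))) => i [ik [hb _]]; exists i.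
- move=> k v A1 Q' d0 _ hd IH d B Q /rfact_mentions [e0|e0].
    by subst d0; apply: lift; case: (IH _ _ _ erefl) => i [ik [hb _]]; exists i.
  case: e0 => ed eB eQ; subst; exists k; split=> //; split=> //.
- move=> k v Q1 Q' d0 e _ hd IH d B Q /rfact_mentions [e0|e0].
    subst d0; apply: lift.
    by case: (IH _ _ _ (proj2 (rfact_mentions _ _ _ _) (or_introl erefl))) => i [ik [hb _]]; exists i.
  case: e0 => ed eB eQ; subst; exists k; split=> //; split=> //.
  by exists e.
- move=> k v Q1 Q2 d0 e _ _ IH d B Q hm; apply: lift.
  have hm' : fmentions (Anon d B Q) (rfact Q1 d0 e) by apply/rfact_mentions; apply/(rfact_mentions Q2).
  by case: (IH _ _ _ hm') => i [ik [hb _]]; exists i.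
Qed.


Lemma der_S_inv k v f : dr k.+1 v f ->
 (exists A1 A d, f = FC A d /\ List.In (CIpos (BA A1) (BA A)) T /\ dr k v (FC A1 d)) \/
 (exists Q A d e, f = FC A d /\ List.In (CIpos (BE Q) (BA A)) T /\ dr k v (rfact Q d e)) \/
 (exists B Q d, f = rfact Q d (Anon d B Q) /\ List.In (CIpos B (BE Q)) T /\ bdr k v B d) \/
 (exists Q1 Q2 d e, f = rfact Q2 d e /\ List.In (RIpos Q1 Q2) T /\ dr k v (rfact Q1 d e)).
Proof.
move=> h; inversion h; subst.
- by left; exists A1, A, d.
- by right; left; exists Q, A, d, e.
- by right; right; left; exists (BA A1), Q, d.
- by right; right; left; exists (BE Q1), Q, d; split=> //; split=> //; exists e.
- by right; right; right; exists Q1, Q2, d, e.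
Qed.

Lemma der_0_inv v f : dr 0 v f ->
  (exists A a, f = FC A (Named a) /\ List.In (CA A a v) Ab) \/
  (exists r a b, f = FR r (Named a) (Named b) /\ List.In (RA r a b v) Ab).
Proof. move=> h; inversion h; subst; [left; by exists A, a|right; by exists r, a, b]. Qed.

Context (beta : R).
Definition good_at (f : fact) (j : nat) : Prop := exists v, beta < v /\ dr j v f.
Definition good f := exists j, good_at f j.
Definition mindep (f : fact) : nat :=
  match pselect (exists j, `[< good_at f j >]) with
  | left H => ex_minn H
  | right _ => 0%N
  end.

Lemma mindep_spec f : good f -> good_at f (mindep f) /\ forall j, good_at f j -> (mindep f <= j)%N.
Proof.
move=> [j0 hj0]; rewrite /mindep; case: pselect => [H|nH].
  case: ex_minnP => m /asboolP hm hmin; split=> // j hj; apply: hmin; exact/asboolP.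
by exfalso; apply: nH; exists j0; apply/asboolP.
Qed.

End Compl.

Lemma In_map_iff {X Y : Type} (f : X -> Y) y l : List.In y (map f l) <-> exists x, List.In x l /\ y = f x.
Proof.
elim: l y => [|a l IH] y /=; first by split=> // [[x []]].
split.
  case=> [ey|hin]; first by exists a; split=> //; left.
  by case: (proj1 (IH _) hin) => x [xin ->]; exists x; split=> //; right.
case=> x [[ea|xin] ->]; first by left; rewrite ea.
by right; apply: (proj2 (IH _)); exists x.
Qed.

Lemma Forall2_In_l {X Y : Type} (P : X -> Y -> Prop) l1 l2 x : List.Forall2 P l1 l2 -> List.In x l1 -> exists y, P x y.
Proof.
move=> h; elim: h => [//|a b l1' l2' pab _ IH] /= [ea|xin]; first by subst; exists b.
exact: IH.
Qed.

Lemma undup_lt (x : nat) (l l' : seq nat) : x \in l -> (forall z, z \in l' -> z \in l /\ z != x) ->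
  (size (undup l') < size (undup l))%N.
Proof.
move=> xl H.
have hs : {subset undup l' <= rem x (undup l)}.
  move=> z; rewrite mem_undup => /H [zl zx].
  by rewrite (mem_rem_uniq _ (undup_uniq l)) inE zx mem_undup.
have := uniq_leq_size (undup_uniq l') hs.
rewrite size_rem ?mem_undup //.
have : (0 < size (undup l))%N by case: (undup l) (mem_undup l x) => //; rewrite xl.
by case: (size (undup l)).
Qed.

Lemma tvars_sub1 x t u z : z \in tvars (subst_term (sub1 x t) u) -> (z \in tvars u /\ z != x) \/ z \in tvars t.
Proof.
case: u => [y|a] //=; rewrite /sub1; case: eqP => [_|ne] /=; first by right.
move=> zy; left; move: zy; rewrite !inE => /eqP ->; split=> //; exact/eqP.
Qed.

Lemma avars_sub1 x t h z : z \in avars (subst_atom (sub1 x t) h) -> (z \in avars h /\ z != x) \/ z \in tvars t.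
Proof.
case: h => [A u|r u1 u2] /=; first exact: tvars_sub1.
rewrite mem_cat => /orP[/tvars_sub1|/tvars_sub1] [[h1 h2]|h]; try (by right);
  by left; rewrite mem_cat h1 ?orbT.
Qed.

Section Main.
Context {R : realType} (T : tbox) (Ab : fabox R) (Q : ucq) (tup : seq indiv) (beta : R).
Hypothesis Hdeg : forall f, List.In f Ab -> assert_deg_ok f.
Hypothesis hQ : ucq_safe Q.
Hypothesis hb1 : beta < 1.
Local Notation dr := (der T Ab).
Local Notation bdr := (bder T Ab).
Local Notation md := (mindep T Ab beta).
Local Notation good := (good T Ab beta).

Definition mu (q : cq) (s : nat -> elt) : nat := sumn (map (fun g => md (fact_of s g)) (body q)).
Definition nvars (q : cq) : nat := size (undup (bvars q)).
Definition headok (s : nat -> elt) (q : cq) := List.Forall2 (fun t a => tval s t = Named a) (Defs.head q) tup.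
Definition allgood (s : nat -> elt) (q : cq) := forall g, List.In g (body q) -> good (fact_of s g).
Definition concl := exists q' (sg : nat -> indiv), perfect_ref T Q q' /\
  beta < conj_val (map (abox_atom_deg Ab sg) (body q')) /\
  (forall x, var_of x q' -> adom Ab (sg x)) /\
  List.Forall2 (fun t a => term_ival sg t = a) (Defs.head q') tup.

Lemma good_md k w f : beta < w -> dr k w f -> (md f <= k)%N.
Proof. move=> bw hd; have hg : good_at T Ab beta f k by exists w. by apply: (proj2 (mindep_spec (ex_intro _ k hg))). Qed.

Lemma step_concl m (IHm : forall q' s', perfect_ref T Q q' -> allgood s' q' -> headok s' q' -> (mu q' s' < m)%N -> concl)
  q s s' g ax g' k w :
  perfect_ref T Q q -> List.In g (body q) -> List.In ax T -> gr q g ax g' ->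
  (forall x, var_of x q -> s' x = s x) -> beta < w -> dr k w (fact_of s' g') ->
  md (fact_of s g) = k.+1 -> allgood s q -> headok s q -> mu q s = m -> concl.
Proof.
move=> hq gin axin hgr agree bw hd mdg ag ho hmu.
set b' := g' :: filter (fun h => h != g) (body q).
have agree_h : forall h, List.In h (body q) -> fact_of s' h = fact_of s h.
  by move=> h hin; apply: fact_of_ext => x ox; apply: agree; right; exists h.
apply: (IHm (CQ (Defs.head q) b') s').
- apply: pr_atom hq gin axin hgr _ => h /=; split.
    by case=> [<-|/In_filter [h1 /eqP h2]]; [right|left].
  by case=> [[hin /eqP hne]|->]; [right; apply/In_filter|left].
- move=> h /= [<-|/In_filter [hin _]]; first by exists k, w.
  by rewrite agree_h //; apply: ag.
- rewrite /headok /=; apply: Forall2_in ho => t a tin <-.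
  by case: t tin => //= x xin; apply: agree; left.
- rewrite /mu /= -hmu /mu.
  have -> : map (fun h => md (fact_of s' h)) (filter (fun h => h != g) (body q)) =
            map (fun h => md (fact_of s h)) (filter (fun h => h != g) (body q)).
    apply/eq_in_map => h /mem_In /In_filter [hin _]; by rewrite agree_h.
  apply: leq_trans (sumn_filter_neq _ gin); rewrite addnC ltn_add2l mdg ltnS.
  exact: good_md bw hd.
Qed.


Lemma abox_c_ge A a w : List.In (CA A a w) Ab -> w <= sup ([set 0] `|` [set v | List.In (CA A a v) Ab]).
Proof.
move=> hin; apply: (@sup0U_mem _ _ 1) => //.
by move=> y hy; case/andP: (@der_bnd _ T Ab Hdeg _ _ _ (der_c T hy)).
Qed.

Lemma abox_r_ge r a b w : List.In (RA r a b w) Ab -> w <= sup ([set 0] `|` [set v | List.In (RA r a b v) Ab]).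
Proof.
move=> hin; apply: (@sup0U_mem _ _ 1) => //.
by move=> y hy; case/andP: (@der_bnd _ T Ab Hdeg _ _ _ (der_r T hy)).
Qed.

Lemma base_concl q s : perfect_ref T Q q -> allgood s q -> headok s q ->
  (forall g, List.In g (body q) -> md (fact_of s g) = 0%N) -> concl.
Proof.
move=> hq ag ho hz.
set sg := fun x => match s x with Named a => a | _ => II 0 end.
have hn : forall t a, tval s t = Named a -> term_ival sg t = a.
  by case=> [x|a'] a /= h; [rewrite /sg h|case: h].
have at0 : forall g, List.In g (body q) -> exists w, beta < w /\ dr 0 w (fact_of s g).
  by move=> g gin; have [h _] := mindep_spec (ag g gin); rewrite hz in h.
have hocc : forall g x, List.In g (body q) -> occ_atom x g -> adom Ab (sg x).
  move=> g x gin ox; have [w [_ /der_0_inv]] := at0 g gin.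
  case=> [[A [a [ef hin]]]|[r [a [b [ef hin]]]]].
    case: g ef ox {gin} => [A' t|r' t1 t2] //= [_ et] et'; subst t; move: et => /= et.
    by exists (CA A a w); split=> //=; rewrite /sg /= et; left.
  case: g ef ox {gin} => [A' t|r' t1 t2] //= [_ e1 e2] [et|et]; subst; move: e1 e2 => /= e1 e2.
    by exists (RA r a b w); split=> //=; rewrite /sg /= e1; left.
  by exists (RA r a b w); split=> //=; rewrite /sg /= e2; right; left.
exists q, sg; split=> //; split; last split.
- apply/conj_gt; split=> // g gin; have [w [bw /der_0_inv]] := at0 g gin.
  case=> [[A [a [ef hin]]]|[r [a [b [ef hin]]]]].
    case: g ef {gin} => [A' t|r' t1 t2] //= [eA et]; subst A'.
    by rewrite (hn _ _ et); apply: lt_le_trans bw (abox_c_ge hin).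
  case: g ef {gin} => [A' t|r' t1 t2] //= [er e1 e2]; subst r'.
  by rewrite (hn _ _ e1) (hn _ _ e2); apply: lt_le_trans bw (abox_r_ge hin).
- move=> x [xh|[g [gin ox]]]; last exact: hocc gin ox.
  have [g [gin ox]] := ref_safe hQ hq xh; exact: hocc gin ox.
- by apply: Forall2_in ho => t a _; apply: hn.
Qed.


Lemma reduce_concl m N
  (IHN : forall q' s', perfect_ref T Q q' -> allgood s' q' -> headok s' q' -> mu q' s' = m -> (nvars q' < N)%N -> concl)
  q s g1 g2 x t :
  perfect_ref T Q q -> List.In g1 (body q) -> List.In g2 (body q) -> mgu (sub1 x t) g1 g2 ->
  tval s t = s x -> x \in bvars q -> (forall z, z \in tvars t -> z \in bvars q) -> t <> TV x ->
  allgood s q -> headok s q -> mu q s = m -> nvars q = N -> concl.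
Proof.
move=> hq g1in g2in hm ht xin tin tnx ag ho hmu hN.
have hs : forall z, tval s (sub1 x t z) = s z.
  by move=> z; rewrite /sub1; case: eqP => [->|].
apply: (IHN (CQ (map (subst_term (sub1 x t)) (Defs.head q)) (map (subst_atom (sub1 x t)) (body q))) s).
- apply: pr_reduce hq g1in g2in hm _ => h; exact: In_map_iff.
- move=> h /= /In_map_iff [h0 [h0in ->]]; rewrite fact_of_subst //; exact: ag.
- by rewrite /headok /=; apply: Forall2_map_r; apply: Forall2_in ho => u a _; rewrite tval_subst.
- rewrite -hmu /mu /= -map_comp; congr sumn; apply: eq_map => h /=; by rewrite fact_of_subst.
- rewrite -hN /nvars; apply: (@undup_lt x _ _ xin) => z /mem_flatten_map [h' /In_map_iff [h0 [h0in ->]] zh].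
  case: (avars_sub1 zh) => [[zh0 zx]|zt].
    by split=> //; apply/mem_flatten_map; exists h0.
  split; first exact: tin.
  by apply/eqP => ezx; subst z; move: zt; case: (t) tnx => //= y ny; rewrite inE => /eqP ey; subst.
Qed.


Lemma tval_upd s z e t : t <> TV z -> tval (upd s z e) t = tval s t.
Proof. case: t => //= y hy; rewrite /upd; case: eqP => // ey; by subst. Qed.

Lemma agree_upd q (s : nat -> elt) z e : fresh q z -> forall x, var_of x q -> upd s z e x = s x.
Proof. by move=> fr x vx; rewrite /upd; case: eqP => // exz; subst. Qed.

Lemma fresh_term q z P u1 u2 : fresh q z -> List.In (QR P u1 u2) (body q) -> u1 <> TV z /\ u2 <> TV z.
Proof.
move=> fr gin; split=> eu; apply: fr; right; exists (QR P u1 u2); split=> //; by [left|right].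
Qed.

Lemma occ_mentions s z h : occ_atom z h -> fmentions (s z) (fact_of s h).
Proof. by case: h => [A t|r t1 t2] /=; [move=> ->|case=> ->; [left|right]]. Qed.

Lemma bvars_in q g x : List.In g (body q) -> x \in avars g -> x \in bvars q.
Proof. by move=> gin xg; apply/mem_flatten_map; exists g. Qed.

Lemma creation_facts q s g k B Q0 d :
  List.In g (body q) -> (forall h, List.In h (body q) -> (md (fact_of s h) <= md (fact_of s g))%N) ->
  fact_of s g = rfact Q0 d (Anon d B Q0) -> md (fact_of s g) = k.+1 -> List.In (CIpos B (BE Q0)) T ->
  allgood s q ->
  forall h, List.In h (body q) -> fmentions (Anon d B Q0) (fact_of s h) -> fact_of s h = fact_of s g.
Proof.
move=> gin hmax efg hk hT ag h hin hm.
have [[w [bw hd]] _] := mindep_spec (ag h hin).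
have [i [ik [hb hi]]] := der_mentions hd hm.
have hcf := der_ce hT hb.
have : (md (fact_of s g) <= i.+1)%N by apply: good_md bw _; rewrite efg.
have := hmax h hin; move: ik; set a := md (fact_of s h); set b := md (fact_of s g) => ik hab hbi.
have ea : i.+1 = a by apply/eqP; rewrite eqn_leq ik (leq_trans hab hbi).
by rewrite efg; apply: hi.
Qed.

Lemma create_concl m N
  (IHm : forall q' s', perfect_ref T Q q' -> allgood s' q' -> headok s' q' -> (mu q' s' < m)%N -> concl)
  (IHN : forall q' s', perfect_ref T Q q' -> allgood s' q' -> headok s' q' -> mu q' s' = m -> (nvars q' < N)%N -> concl)
  q s g k v B Q0 d :
  perfect_ref T Q q -> List.In g (body q) -> (forall h, List.In h (body q) -> (md (fact_of s h) <= md (fact_of s g))%N) ->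
  fact_of s g = rfact Q0 d (Anon d B Q0) -> md (fact_of s g) = k.+1 -> List.In (CIpos B (BE Q0)) T ->
  bdr k v B d -> beta < v -> allgood s q -> headok s q -> mu q s = m -> nvars q = N -> concl.
Proof.
move=> hq gin hmax efg hk hT hb bv ag ho hmu hN.
have hnamed : forall t, List.In t (Defs.head q) -> exists a, tval s t = Named a.
  by move=> t tin; have [a ha] := Forall2_In_l ho tin; exists a.
have dn := @anon_neq d B Q0.
case: Q0 efg hT dn => P efg hT dn;
  (case: g gin hmax efg hk => [A u|r u1 u2] gin hmax efg hk; first by case: efg).
all: have C1 := creation_facts gin hmax efg hk hT ag.
-
  have nvar : forall z, s z = Anon d B (RP P) -> forall h, List.In h (body q) -> occ_atom z h -> fact_of s h = fact_of s (QR r u1 u2) by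
    move=> z sz h hin oz; apply: C1 => //; rewrite -sz; apply: occ_mentions.
  case: efg => er e1 e2; subst r.
  case: u2 gin hmax e2 hk C1 nvar => [y|a] gin hmax e2 hk C1 nvar //.
  move: e2 => /= sy.
  have [[h [hin [oy hne]]]|noh] := pselect (exists h, List.In h (body q) /\ occ_atom y h /\ h <> QR P u1 (TV y)).
    have := nvar y sy h hin oy; rewrite [fact_of s (QR _ _ _)]/= e1 sy.
    case: h hin oy hne => [A t|r t1 t2] hin oy hne //= [er f1 f2]; subst r.
    have t2y : t2 = TV y.
      case: oy => // et1; subst t1; by move: f1; rewrite /= sy => /esym hdd; case: (dn hdd).
    subst t2.
    have ne : t1 <> u1 by move=> et; subst t1.
    case Eu: u1 => [x|c]; rewrite Eu in gin e1 ne.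
    + have xy : x <> y by move=> exy; move: e1; rewrite exy /= sy => /esym hdd; case: (dn hdd).
      apply: (reduce_concl IHN (s := s) (x := x) (t := t1) hq gin hin) => //.
      * by apply: mgu_pos1 => // [[eyx]]; apply: xy.
      * by rewrite f1 -e1.
      * by apply: (bvars_in gin) => /=; rewrite !inE eqxx.
      * by move=> z zt; apply: (bvars_in hin) => /=; rewrite mem_cat zt.
    + case Et: t1 => [x|c']; rewrite Et in hin hne f1 ne; last first.
        move: f1 e1 => /= f1 e1; case: ne; move: f1; rewrite -e1 => -[->] //.
      have xy : x <> y by move=> exy; move: f1; rewrite exy /= sy => /esym hdd; case: (dn hdd).
      apply: (reduce_concl IHN (s := s) (x := x) (t := TC c) hq hin gin) => //.
      * by apply: mgu_pos1 => // [[eyx]]; apply: xy.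
      * by move: f1 e1 => /= -> ->.
      * by apply: (bvars_in hin) => /=; rewrite !inE eqxx.
  have ub : unbound q y.
    split.
      by move/hnamed => [a] /=; rewrite sy.
    exists (QR P u1 (TV y)); split=> //; split; first by right.
    split.
      move=> g' g'in og'; apply: contrapT => ne; apply: noh; by exists g'.
    by case=> eu _; subst u1; move: e1; rewrite /= sy => /esym hdd; case: (dn hdd).
  case: B hb hT C1 nvar sy dn => [A1|[P1|P1]] hb hT _ _ _ _.
  + apply: (step_concl IHm (g' := QA A1 u1) (s' := s) (w := v) (k := k) hq gin hT (@gr_E1 q P u1 y A1 ub)) => //.
    by rewrite /= e1.
  + case: hb => e hd; have [z fr] := exists_fresh q.
    have [fu _] := fresh_term fr gin.
    apply: (step_concl IHm (g' := QR P1 u1 (TV z)) (s := s) (s' := upd s z e) (w := v) (k := k) hq gin hT (@gr_E2 q P u1 y P1 z ub fr)) => //.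
    - exact: agree_upd.
    - by move: hd; rewrite /= tval_upd // e1 /upd eqxx.
  + case: hb => e hd; have [z fr] := exists_fresh q.
    have [fu _] := fresh_term fr gin.
    apply: (step_concl IHm (g' := QR P1 (TV z) u1) (s := s) (s' := upd s z e) (w := v) (k := k) hq gin hT (@gr_E3 q P u1 y P1 z ub fr)) => //.
    - exact: agree_upd.
    - by move: hd; rewrite /= tval_upd // e1 /upd eqxx.
-
  have nvar : forall z, s z = Anon d B (RI P) -> forall h, List.In h (body q) -> occ_atom z h -> fact_of s h = fact_of s (QR r u1 u2) by
    move=> z sz h hin oz; apply: C1 => //; rewrite -sz; apply: occ_mentions.
  case: efg => er e1 e2; subst r.
  case: u1 gin hmax e1 hk C1 nvar => [y|a] gin hmax e1 hk C1 nvar //.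
  move: e1 => /= sy.
  have [[h [hin [oy hne]]]|noh] := pselect (exists h, List.In h (body q) /\ occ_atom y h /\ h <> QR P (TV y) u2).
    have := nvar y sy h hin oy; rewrite [fact_of s (QR _ _ _)]/= e2 sy.
    case: h hin oy hne => [A t|r t1 t2] hin oy hne //= [er f1 f2]; subst r.
    have t1y : t1 = TV y.
      case: oy => // et2; subst t2; by move: f2; rewrite /= sy => /esym hdd; case: (dn hdd).
    subst t1.
    have ne : t2 <> u2 by move=> et; subst t2.
    case Eu: u2 => [x|c]; rewrite Eu in gin e2 ne.
    + have xy : x <> y by move=> exy; move: e2; rewrite exy /= sy => /esym hdd; case: (dn hdd).
      apply: (reduce_concl IHN (s := s) (x := x) (t := t2) hq gin hin) => //.
      * by apply: mgu_pos2 => // [[eyx]]; apply: xy.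
      * by rewrite f2 -e2.
      * by apply: (bvars_in gin) => /=; rewrite !inE eqxx orbT.
      * by move=> z zt; apply: (bvars_in hin) => /=; rewrite inE zt orbT.
    + case Et: t2 => [x|c']; rewrite Et in hin hne f2 ne; last first.
        move: f2 e2 => /= f2 e2; case: ne; move: f2; rewrite -e2 => -[->] //.
      have xy : x <> y by move=> exy; move: f2; rewrite exy /= sy => /esym hdd; case: (dn hdd).
      apply: (reduce_concl IHN (s := s) (x := x) (t := TC c) hq hin gin) => //.
      * by apply: mgu_pos2 => // [[eyx]]; apply: xy.
      * by move: f2 e2 => /= -> ->.
      * by apply: (bvars_in hin) => /=; rewrite !inE eqxx orbT.
  have ub : unbound q y.
    split.
      by move/hnamed => [a] /=; rewrite sy.
    exists (QR P (TV y) u2); split=> //; split; first by left.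
    split.
      move=> g' g'in og'; apply: contrapT => ne; apply: noh; by exists g'.
    by case=> _ eu; subst u2; move: e2; rewrite /= sy => /esym hdd; case: (dn hdd).
  case: B hb hT C1 nvar sy dn => [A1|[P1|P1]] hb hT _ _ _ _.
  + apply: (step_concl IHm (g' := QA A1 u2) (s' := s) (w := v) (k := k) hq gin hT (@gr_I1 q P u2 y A1 ub)) => //.
    by rewrite /= e2.
  + case: hb => e hd; have [z fr] := exists_fresh q.
    have [_ fu] := fresh_term fr gin.
    apply: (step_concl IHm (g' := QR P1 u2 (TV z)) (s := s) (s' := upd s z e) (w := v) (k := k) hq gin hT (@gr_I2 q P u2 y P1 z ub fr)) => //.
    - exact: agree_upd.
    - by move: hd; rewrite /= tval_upd // e2 /upd eqxx.
  + case: hb => e hd; have [z fr] := exists_fresh q.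
    have [_ fu] := fresh_term fr gin.
    apply: (step_concl IHm (g' := QR P1 (TV z) u2) (s := s) (s' := upd s z e) (w := v) (k := k) hq gin hT (@gr_I3 q P u2 y P1 z ub fr)) => //.
    - exact: agree_upd.
    - by move: hd; rewrite /= tval_upd // e2 /upd eqxx.
Qed.


Lemma fresh_termA q z A u : fresh q z -> List.In (QA A u) (body q) -> u <> TV z.
Proof. by move=> fr gin eu; apply: fr; right; exists (QA A u); split. Qed.

Lemma main_lemma m : forall N q s, perfect_ref T Q q -> allgood s q -> headok s q -> mu q s = m -> nvars q = N -> concl.
Proof.
elim/ltn_ind: m => m IHm N; elim/ltn_ind: N => N IHN q s hq ag ho hmu hN.
have IHm' : forall q' s', perfect_ref T Q q' -> allgood s' q' -> headok s' q' -> (mu q' s' < m)%N -> concl.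
  by move=> q' s' h1 h2 h3 h4; exact: (IHm _ h4 (nvars q') q' s' h1 h2 h3 erefl erefl).
have IHN' : forall q' s', perfect_ref T Q q' -> allgood s' q' -> headok s' q' -> mu q' s' = m -> (nvars q' < N)%N -> concl.
  by move=> q' s' h1 h2 h3 h4 h5; exact: (IHN _ h5 q' s' h1 h2 h3 h4 erefl).
have [[g0 [g0in pos]]|noz] := pselect (exists g, List.In g (body q) /\ (0 < md (fact_of s g))%N); last first.
  apply: (base_concl hq ag ho) => g gin; apply/eqP; rewrite -leqn0 leqNgt; apply/negP => p; apply: noz; by exists g.
have [g gin hmax] := exists_max (fun h => md (fact_of s h)) g0in.
have := leq_trans pos (hmax g0 g0in).
case hk: (md (fact_of s g)) => [|k] // _.
have [[v [bv hd]] _] := mindep_spec (ag g gin); rewrite hk in hd.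
case: (der_S_inv hd) => [[A1 [A [d [ef [hT hd']]]]]|[[Q0 [A [d [e [ef [hT hd']]]]]]|[[B [Q0 [d [ef [hT hb]]]]]|[Q1 [Q2 [d [e [ef [hT hd']]]]]]]]].
- case: g gin hmax hk hd ef => [A' t|r t1 t2] gin hmax hk hd //= [eA et]; subst A'.
  apply: (step_concl IHm' (g' := QA A1 t) (s := s) (s' := s) (w := v) (k := k) hq gin hT (@gr_A1 q A A1 t)) => //.
  by rewrite /= et.
- case: g gin hmax hk hd ef => [A' t|r t1 t2] gin hmax hk hd //= [eA et]; subst A'.
  have [z fr] := exists_fresh q; have fu := fresh_termA fr gin.
  case: Q0 hT hd' => P hT hd'.
  + apply: (step_concl IHm' (g' := QR P t (TV z)) (s := s) (s' := upd s z e) (w := v) (k := k) hq gin hT (@gr_A2 q A P t z fr)) => //.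
    * exact: agree_upd.
    * by rewrite /= tval_upd // et /upd eqxx.
  + apply: (step_concl IHm' (g' := QR P (TV z) t) (s := s) (s' := upd s z e) (w := v) (k := k) hq gin hT (@gr_A3 q A P t z fr)) => //.
    * exact: agree_upd.
    * by rewrite /= tval_upd // et /upd eqxx.
- exact: (create_concl IHm' IHN' hq gin hmax ef hk hT hb bv ag ho hmu hN).
- case: g gin hmax hk hd ef => [A' t|r t1 t2] gin hmax hk hd; first by case: Q2 {hT} => P.
  case: Q2 hT => P hT /= [er e1 e2]; subst r; case: Q1 hT hd' => P1 hT hd'.
  + apply: (step_concl IHm' (g' := QR P1 t1 t2) (s := s) (s' := s) (w := v) (k := k) hq gin hT (@gr_R1 q P P1 t1 t2)) => //.
    by rewrite /= e1 e2.
  + apply: (step_concl IHm' (g' := QR P1 t2 t1) (s := s) (s' := s) (w := v) (k := k) hq gin hT (@gr_R3 q P P1 t1 t2)) => //.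
    by rewrite /= e1 e2.
  + apply: (step_concl IHm' (g' := QR P1 t2 t1) (s := s) (s' := s) (w := v) (k := k) hq gin hT (@gr_R4 q P P1 t1 t2)) => //.
    by rewrite /= e1 e2.
  + apply: (step_concl IHm' (g' := QR P1 t1 t2) (s := s) (s' := s) (w := v) (k := k) hq gin hT (@gr_R2 q P P1 t1 t2)) => //.
    by rewrite /= e1 e2.
Qed.

End Main.

Lemma term_val_I0 {R : realType} (T : tbox) (Ab : fabox R) s t : term_val (I0 T Ab) s t = tval s t.
Proof. by case: t. Qed.

Lemma atom_val_I0 {R : realType} (T : tbox) (Ab : fabox R) s g :
  atom_val (I0 T Ab) s g = sup ([set 0] `|` [set v | exists k, der T Ab k v (fact_of s g)]).
Proof. by case: g => [A t|r t1 t2] /=; rewrite !term_val_I0. Qed.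

Lemma abox_cq_deg_le1 {R : realType} (Ab : fabox R) q tup : abox_cq_deg Ab q tup <= 1.
Proof. by apply: sup0U_le => // y [s _ <-]; apply: conj_le1. Qed.

Lemma abox_ucq_bnd {R : realType} (Ab : fabox R) Qs tup : 0 <= abox_ucq_deg Ab Qs tup <= 1.
Proof.
apply/andP; split; first by apply: (@sup0U_ge0 _ _ 1) => // y [q _ <-]; apply: abox_cq_deg_le1.
by apply: sup0U_le => // y [q _ <-]; apply: abox_cq_deg_le1.
Qed.

Lemma complete {R : realType} (T : tbox) (Ab : fabox R) (Q : ucq) tup :
  (forall f, List.In f Ab -> assert_deg_ok f) -> ucq_safe Q ->
  ucq_deg (I0 T Ab) Q tup <= abox_ucq_deg Ab (ref Q T) tup.
Proof.
move=> Hdeg hQ; set beta := abox_ucq_deg Ab (ref Q T) tup.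
have [b0 b1] : 0 <= beta /\ beta <= 1 by apply/andP; apply: abox_ucq_bnd.
rewrite leNgt; apply/negP => hlt.
have [_ [q qin <-] hq] := sup0U_gt b0 hlt.
have [_ [s hs <-] hc] := sup0U_gt b0 hq.
have [hb1 hat] := proj1 (conj_gt _ _ _) hc.
have ag : allgood T Ab beta s q.
  move=> g gin; have := hat g gin; rewrite atom_val_I0 => /(sup0U_gt b0) [v [k hd] bv].
  by exists k, v.
have ho : headok tup s q by apply: Forall2_in hs => t a _; rewrite term_val_I0.
have [q' [sg [hq' [hc' [hadom hh]]]]] :=
  main_lemma Hdeg hQ hb1 (@pr_init T Q q qin) ag ho erefl erefl.
have : abox_cq_deg Ab q' tup <= beta.
  apply: (@sup0U_mem _ _ 1) => //; last by exists q'.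
  by move=> y [q'' _ <-]; apply: abox_cq_deg_le1.
have : conj_val (map (abox_atom_deg Ab sg) (body q')) <= abox_cq_deg Ab q' tup.
  apply: (@sup0U_mem _ _ 1) => //; last by exists sg.
  by move=> y [s' _ <-]; apply: conj_le1.
move=> h1 h2; have := lt_le_trans hc' (le_trans h1 h2); by rewrite ltxx.
Qed.

Unset Implicit Arguments.

Theorem proposition3 (R : realType) (T : tbox) (Ab : fabox R) (Q : ucq) :
  is_FAKB T Ab ->
  satisfiable T Ab ->
  ucq_safe Q ->
  fcert Q T Ab = fans (ref Q T) Ab.
Proof.
move=> hF hsat hQ.
have Hdeg := proj1 (proj2 hF).
have hI0 := I0_model Hdeg hF hsat.
have key : forall tup, inf [set ucq_deg I Q tup | I in [set I : finterp R | is_model T Ab I]] =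
                       abox_ucq_deg Ab (ref Q T) tup.
  move=> tup; set S := [set _ | _ in _]; set beta := abox_ucq_deg _ _ _.
  have lb : lbound S beta by move=> _ [I hI <-]; apply: sound_all.
  have e0 : ucq_deg (I0 T Ab) Q tup = beta.
    by apply/eqP; rewrite eq_le complete // sound_all.
  have S0 : S (ucq_deg (I0 T Ab) Q tup) by exists (I0 T Ab).
  apply/eqP; rewrite eq_le; apply/andP; split.
    by rewrite -e0; apply: ge_inf => //; exists beta.
  by apply: lb_le_inf => //; exists (ucq_deg (I0 T Ab) Q tup).
apply/seteqP; split => -[tup a] /=; rewrite /fcert /fans /ans /= key.
  by case=> -> h.
by case=> h ->.
Qed.
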